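(* Let $A$ be the random matrix defined in the context. If $D/(k\log k)\to\infty$, then with probability $1-o(1)$, $\kappa(A)\ge\Omega(\sqrt k)$. If $D/(k^2\log k)\to\infty$, then with probability $1-o(1)$, $\lambda(A)\le 2$.
   Context: Random instance: let $S_1,\dots,S_k\subseteq[D]$ be independent uniformly random subsets of $[D]$ (each element included independently with probability $1/2$), and let $A\in\mathbb{R}^{D\times k}$ have $A_{ij}=1/|S_j|$ if $i\in S_j$ and $A_{ij}=0$ otherwise. The $\ell_\infty\to\ell_1$ condition number $\lambda(A)$ is the smallest $\lambda$ such that $\|Ax\|_1\ge\|x\|_\infty/\lambda$ for all $x\in\mathbb{R}^k$. The $\ell_1$-condition number $\kappa(A)$ is the smallest $\kappa$ such that $\|Ax\|_1\ge\|x\|_1/\kappa$ for all $x\in\mathbb{R}^k$. Asymptotics are as $k\to\infty$. *)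

(* Defs.v *)
From HB Require Import structures.
From mathcomp Require Import all_boot.
From Stdlib Require Import Reals ClassicalDescription.
Set Implicit Arguments. Unset Strict Implicit. Unset Printing Implicit Defensive.

Definition pbool (P : Prop) : bool :=
  if excluded_middle_informative P then true else false.

(* Sample space: k-tuples (S_1,...,S_k) of subsets of [D] = 'I_D.
   Including each element independently with prob. 1/2 is the uniform
   distribution on this finite space. *)
Definition config (D k : nat) := {ffun 'I_k -> {set 'I_D}}.

Definition prob (D k : nat) (E : config D k -> Prop) : R :=
  (INR #|[pred S : config D k | pbool (E S)]| / INR #|{: config D k}|)%R.

Definition Amat (D k : nat) (S : config D k) (i : 'I_D) (j : 'I_k) : R :=
  if i \in S j then (/ INR #|S j|)%R else 0%R.

Definition rsum (n : nat) (f : 'I_n -> R) : R := \big[Rplus/0%R]_(i < n) f i.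
Definition norm1 (n : nat) (x : 'I_n -> R) : R := rsum (fun i => Rabs (x i)).
Definition norminf (n : nat) (x : 'I_n -> R) : R := \big[Rmax/0%R]_(i < n) Rabs (x i).

Definition Amul (D k : nat) (S : config D k) (x : 'I_k -> R) : 'I_D -> R :=
  fun i => rsum (fun j => (Amat S i j * x j)%R).

Definition l1_cond_ok (D k : nat) (S : config D k) (kap : R) : Prop :=
  (0 < kap)%R /\ forall x : 'I_k -> R, (norm1 x / kap <= norm1 (Amul S x))%R.

Definition linf_cond_ok (D k : nat) (S : config D k) (lam : R) : Prop :=
  (0 < lam)%R /\ forall x : 'I_k -> R, (norminf x / lam <= norm1 (Amul S x))%R.

(* kappa(A) >= t : every admissible kappa is >= t (kappa = +oo if none) *)
Definition kappa_ge (D k : nat) (S : config D k) (t : R) : Prop :=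
  forall kap, l1_cond_ok S kap -> (t <= kap)%R.

Definition lambda_le (D k : nat) (S : config D k) (t : R) : Prop :=
  exists lam, linf_cond_ok S lam /\ (lam <= t)%R.

(* Main.v *)
Require Import Defs.
From HB Require Import structures.
From mathcomp Require Import all_boot.
From Stdlib Require Import Reals Lra Lia ClassicalDescription.
Set Implicit Arguments. Unset Strict Implicit. Unset Printing Implicit Defensive.

Local Open Scope R_scope.

Lemma Rplus_0l' : left_id 0%R Rplus. Proof. move=> x; lra. Qed.
Lemma Rplus_A : associative Rplus. Proof. move=> x y z; lra. Qed.
Lemma Rplus_C : commutative Rplus. Proof. move=> x y; lra. Qed.
Lemma Rmult_1l' : left_id 1%R Rmult. Proof. move=> x; lra. Qed.
Lemma Rmult_A : associative Rmult. Proof. move=> x y z; ring. Qed.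
Lemma Rmult_C : commutative Rmult. Proof. move=> x y; ring. Qed.
Lemma Rmult_0l' : left_zero 0%R Rmult. Proof. move=> x; ring. Qed.
Lemma Rmult_0r' : right_zero 0%R Rmult. Proof. move=> x; ring. Qed.
Lemma Rmult_Dl : left_distributive Rmult Rplus. Proof. move=> x y z; ring. Qed.
Lemma Rmult_Dr : right_distributive Rmult Rplus. Proof. move=> x y z; ring. Qed.

HB.instance Definition _ := Monoid.isComLaw.Build R 0%R Rplus Rplus_A Rplus_C Rplus_0l'.
HB.instance Definition _ := Monoid.isComLaw.Build R 1%R Rmult Rmult_A Rmult_C Rmult_1l'.
HB.instance Definition _ := Monoid.isMulLaw.Build R 0%R Rmult Rmult_0l' Rmult_0r'.
HB.instance Definition _ := Monoid.isAddLaw.Build R Rmult Rplus Rmult_Dl Rmult_Dr.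


Notation "\rsum_ ( i : T ) F" := (\big[Rplus/0%R]_(i : T) F) (at level 41, F at level 41, i, T at level 50) : R_scope.

Lemma sumR_le (T : finType) (P : pred T) (F G : T -> R) :
  (forall i, P i -> F i <= G i) ->
  \big[Rplus/0]_(i | P i) F i <= \big[Rplus/0]_(i | P i) G i.
Proof. move=> H; apply: (big_ind2 (fun a b => a <= b)) => //; [lra| move=> *; lra]. Qed.

Lemma sumR_ge0 (T : finType) (P : pred T) (F : T -> R) :
  (forall i, P i -> 0 <= F i) -> 0 <= \big[Rplus/0]_(i | P i) F i.
Proof. move=> H; apply: (big_ind (fun a => 0 <= a)) => //; [lra| move=> *; lra]. Qed.

Lemma INR_sum (T : finType) (P : pred T) (f : T -> nat) :
  INR (\sum_(i | P i) f i) = \big[Rplus/0]_(i | P i) INR (f i).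
Proof. by apply: (big_morph INR) => // x y; rewrite plus_INR. Qed.

Lemma card_ind (T : finType) (P : pred T) :
  INR #|P| = \big[Rplus/0]_(i : T) (if P i then 1 else 0).
Proof.
rewrite -sum1_card INR_sum big_mkcond /=; apply: eq_bigr => i _.
by rewrite unfold_in; case: (P i).
Qed.

Lemma sum_constR (T : finType) (c : R) :
  \big[Rplus/0]_(i : T) c = INR #|T| * c.
Proof.
rewrite -[X in INR X]sum1_card INR_sum big_distrl /=.
by apply: eq_bigr => i _; rewrite /= Rmult_1_l.
Qed.

Lemma sum_absR (T : finType) (P : pred T) (F : T -> R) :
  Rabs (\big[Rplus/0]_(i | P i) F i) <= \big[Rplus/0]_(i | P i) Rabs (F i).
Proof.
apply: (big_ind2 (fun a b => Rabs a <= b)).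
- by rewrite Rabs_R0; lra.
- move=> a1 a2 b1 b2 h1 h2; apply: Rle_trans (Rabs_triang _ _) _; lra.
- by move=> i _; lra.
Qed.

Lemma exp_sum (T : finType) (P : pred T) (F : T -> R) :
  exp (\big[Rplus/0]_(i | P i) F i) = \big[Rmult/1]_(i | P i) exp (F i).
Proof. by apply: (big_morph exp) => [x y|]; [rewrite exp_plus | rewrite exp_0]. Qed.

Lemma sum_if (T : finType) (P : pred T) (a b : R) :
  \big[Rplus/0]_(i : T) (if P i then a else b) = INR #|P| * a + (INR #|T| - INR #|P|) * b.
Proof.
transitivity (\big[Rplus/0]_(i : T) (b + (a - b) * (if P i then 1 else 0))).
  by apply: eq_bigr => i _; case: (P i); ring.
rewrite big_split /= -big_distrr /= sum_constR (card_ind P).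
set n := INR #|T|. set m := bigop.body _ _ _. ring.
Qed.

Lemma exp_le_mono x y : x <= y -> exp x <= exp y.
Proof. case/Rle_lt_or_eq_dec => [h|->]; [apply: Rlt_le; exact: exp_increasing | lra]. Qed.

Lemma exp_pow x n : exp x ^ n = exp (INR n * x).
Proof.
elim: n => [|n IH]; first by rewrite /= Rmult_0_l exp_0.
rewrite S_INR; change (exp x * exp x ^ n = exp ((INR n + 1) * x)).
by rewrite IH -exp_plus; congr exp; ring.
Qed.

Lemma prod_constR n c : \big[Rmult/1]_(i < n) c = c ^ n.
Proof. rewrite big_const_ord; elim: n => //= n ->; done. Qed.

Lemma exp_quad l : Rabs l <= 1/2 -> exp l <= 1 + l + 2 * l^2.
Proof.
move=> hl.
have h1 := exp_ineq1_le (- l).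
have hl' : -1/2 <= l <= 1/2 by split; [have := Rabs_Ropp l; have := Rle_abs (-l) | have := Rle_abs l]; lra.
have hpos : 0 < 1 - l by lra.
have he : exp l * exp (- l) = 1 by rewrite -exp_plus Rplus_opp_r exp_0.
have hel := exp_pos l.
have hq : 1 <= (1 - l) * (1 + l + 2 * l^2) by nra.
nra.
Qed.

Lemma chernoff (T : finType) (D : nat) (f : T -> bool) (mu lam : R) :
  INR #|[pred x | f x]| = mu * INR #|T| -> 0 <= mu <= 1 -> Rabs lam <= 1/2 ->
  \big[Rplus/0]_(w : {ffun 'I_D -> T})
     exp (lam * (\big[Rplus/0]_(i : 'I_D) (if f (w i) then 1 else 0) - INR D * mu))
  <= INR #|T| ^ D * exp (2 * lam^2 * mu * INR D).
Proof.
move=> hcard hmu hlam.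
set F := fun (i : 'I_D) (x : T) => exp (lam * ((if f x then 1 else 0) - mu)).
have e1 : forall w : {ffun 'I_D -> T},
    exp (lam * (\big[Rplus/0]_(i : 'I_D) (if f (w i) then 1 else 0) - INR D * mu))
    = \big[Rmult/1]_(i : 'I_D) F i (w i).
  move=> w; rewrite /F -exp_sum; congr exp.
  rewrite -big_distrr /= big_split /= sum_constR card_ord; ring.
rewrite (eq_bigr _ (fun w _ => e1 w)) -bigA_distr_bigA /= /F prod_constR.
set c := \big[Rplus/0]_(x : T) _.
have ec : c = INR #|T| * exp (- lam * mu) * (1 + mu * (exp lam - 1)).
  rewrite /c.
  rewrite (eq_bigr (fun x => if f x then exp (lam * (1 - mu)) else exp (- lam * mu))); last first.
    by move=> x _; case: (f x); congr exp; ring.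
  rewrite sum_if hcard.
  have -> : exp (lam * (1 - mu)) = exp lam * exp (- lam * mu) by rewrite -exp_plus; congr exp; ring.
  set n := INR #|T|; ring.
have hT : 0 <= INR #|T| by apply: pos_INR.
have hc0 : 0 <= c by rewrite /c; apply: sumR_ge0 => x _; apply: Rlt_le; apply: exp_pos.
have hc : c <= INR #|T| * exp (2 * lam^2 * mu).
  rewrite ec.
  have h1 := exp_quad hlam.
  have h2 : 1 + mu * (exp lam - 1) <= exp (mu * (lam + 2 * lam ^ 2)).
    apply: Rle_trans (exp_ineq1_le _); nra.
  have h3 : exp (- lam * mu) * exp (mu * (lam + 2 * lam ^ 2)) = exp (2 * lam^2 * mu).
    by rewrite -exp_plus; congr exp; ring.
  have h4 := exp_pos (- lam * mu).
  have h5 : 0 <= 1 + mu * (exp lam - 1) by have := exp_pos lam; nra.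
  rewrite -h3 Rmult_assoc; apply: Rmult_le_compat_l => //.
  by apply: Rmult_le_compat_l => //; lra.
apply: Rle_trans (pow_incr _ _ D (conj hc0 hc)) _.
rewrite Rpow_mult_distr exp_pow.
apply: Rmult_le_compat_l; first by apply: pow_le.
apply: exp_le_mono; lra.
Qed.

Lemma pboolP (P : Prop) : reflect P (pbool P).
Proof. rewrite /pbool; case: excluded_middle_informative => h; constructor => //. Qed.

Definition ind (P : Prop) : R := if pbool P then 1 else 0.

Lemma ind_ge0 P : 0 <= ind P. Proof. rewrite /ind; case: pbool; lra. Qed.
Lemma ind_le1 P : ind P <= 1. Proof. rewrite /ind; case: pbool; lra. Qed.
Lemma ind_T (P : Prop) : P -> ind P = 1.
Proof. by rewrite /ind => h; case: pboolP. Qed.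
Lemma ind_F (P : Prop) : ~ P -> ind P = 0.
Proof. by rewrite /ind => h; case: pboolP. Qed.

Lemma tail2 (T : finType) (D : nat) (f : T -> bool) (mu eps : R) :
  INR #|[pred x | f x]| = mu * INR #|T| -> 0 <= mu <= 1 -> 0 < eps <= 2 ->
  \big[Rplus/0]_(w : {ffun 'I_D -> T})
     ind (eps * INR D <= Rabs (\big[Rplus/0]_(i : 'I_D) (if f (w i) then 1 else 0) - INR D * mu))
  <= 2 * INR #|T| ^ D * exp (- eps^2 * INR D / 8).
Proof.
move=> hcard hmu heps.
set lam := eps / 4.
have hD : 0 <= INR D by apply: pos_INR.
have hl1 : Rabs lam <= 1/2 by rewrite Rabs_right /lam; lra.
have hl2 : Rabs (- lam) <= 1/2 by rewrite Rabs_Ropp.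
set N := fun w : {ffun 'I_D -> T} => \big[Rplus/0]_(i : 'I_D) (if f (w i) then 1 else 0).
have pt : forall w, ind (eps * INR D <= Rabs (N w - INR D * mu)) <=
   exp (- (lam * eps * INR D)) * exp (lam * (N w - INR D * mu))
 + exp (- (lam * eps * INR D)) * exp (- lam * (N w - INR D * mu)).
  move=> w; rewrite /ind; case: pboolP => h; last first.
    have := exp_pos (- (lam * eps * INR D)); have := exp_pos (lam * (N w - INR D * mu));
    have := exp_pos (- lam * (N w - INR D * mu)); nra.
  rewrite -!exp_plus.
  have := exp_pos (- (lam * eps * INR D) + lam * (N w - INR D * mu)).
  have := exp_pos (- (lam * eps * INR D) + - lam * (N w - INR D * mu)).
  case: (Rle_or_lt 0 (N w - INR D * mu)) => hs.
  - rewrite Rabs_right in h; last lra.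
    have := exp_ineq1_le (- (lam * eps * INR D) + lam * (N w - INR D * mu)).
    rewrite /lam in h *; nra.
  - rewrite Rabs_left in h; last lra.
    have := exp_ineq1_le (- (lam * eps * INR D) + - lam * (N w - INR D * mu)).
    rewrite /lam in h *; nra.
apply: Rle_trans (@sumR_le _ xpredT _ _ (fun w _ => pt w)) _.
rewrite big_split -!big_distrr.
have c1 := chernoff D hcard hmu hl1.
have c2 := chernoff D hcard hmu hl2.
rewrite -/N in c1 c2.
have hE : exp (- (lam * eps * INR D)) * exp (2 * lam ^ 2 * mu * INR D) <= exp (- eps ^ 2 * INR D / 8).
  rewrite -exp_plus; apply: exp_le_mono; rewrite /lam.
  have : 0 <= eps^2 * INR D by nra.
  nra.
have hEE : exp (- (lam * eps * INR D)) * exp (2 * (- lam) ^ 2 * mu * INR D) <= exp (- eps ^ 2 * INR D / 8).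
  by have -> : (- lam) ^ 2 = lam ^ 2 by ring.
have hp := exp_pos (- (lam * eps * INR D)).
have hTD : 0 <= INR #|T| ^ D by apply: pow_le; apply: pos_INR.
apply: Rle_trans (Rplus_le_compat _ _ _ _ (Rmult_le_compat_l _ _ _ (Rlt_le _ _ hp) c1) (Rmult_le_compat_l _ _ _ (Rlt_le _ _ hp) c2)) _.
have h3 := Rmult_le_compat_l _ _ _ hTD hE.
have h4 := Rmult_le_compat_l _ _ _ hTD hEE.
nra.
Qed.

Lemma INR_expn a n : INR (expn a n) = INR a ^ n.
Proof. elim: n => [|n IH]; first by rewrite expn0. by rewrite expnS mult_INR IH. Qed.

Section Trans.
Variables D k : nat.
Definition Xk := {ffun 'I_k -> bool}.
Definition Om := {ffun 'I_D -> Xk}.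
Definition tr (w : Om) : config D k := [ffun j => [set i | w i j]].
Definition untr (S : config D k) : Om := [ffun i => [ffun j => i \in S j]].
Lemma tr_can : cancel tr untr.
Proof. move=> w; apply/ffunP => i; apply/ffunP => j; by rewrite !ffunE inE. Qed.
Lemma untr_can : cancel untr tr.
Proof. move=> S; apply/ffunP => j; apply/setP => i; by rewrite !ffunE inE !ffunE. Qed.

Lemma sum_tr (F : config D k -> R) :
  \big[Rplus/0]_(S : config D k) F S = \big[Rplus/0]_(w : Om) F (tr w).
Proof.
rewrite (reindex tr) //; apply: onW_bij; exact: (Bijective tr_can untr_can).
Qed.

Lemma prob_sum (E : config D k -> Prop) :
  prob E = (\big[Rplus/0]_(w : Om) ind (E (tr w))) / (INR #|{: Xk}| ^ D).
Proof.
rewrite /prob card_ind sum_tr; congr Rdiv.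
have h1 := sum_constR (config D k) 1.
have h2 := sum_constR Om 1.
rewrite sum_tr in h1.
rewrite card_ffun card_ord INR_expn Rmult_1_r in h2.
rewrite Rmult_1_r in h1.
rewrite -h1; exact: h2.
Qed.

Lemma Ntr (w : Om) j :
  INR #|tr w j| = \big[Rplus/0]_(i : 'I_D) (if (fun c : Xk => c j) (w i) then 1 else 0).
Proof. rewrite ffunE cardsE card_ind; apply: eq_bigr => i _. done. Qed.

Lemma N2tr (w : Om) j j' :
  INR #|tr w j :&: tr w j'| = \big[Rplus/0]_(i : 'I_D) (if (fun c : Xk => c j && c j') (w i) then 1 else 0).
Proof.
have -> : tr w j :&: tr w j' = [set i | w i j && w i j'] by apply/setP => i; rewrite !ffunE !inE.
rewrite cardsE card_ind; apply: eq_bigr => i _. done. Qed.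
End Trans.

Definition flip k (j : 'I_k) (c : Xk k) : Xk k := [ffun l => if l == j then ~~ c l else c l].
Lemma flipK k j : involutive (@flip k j).
Proof. move=> c; apply/ffunP => l; rewrite !ffunE; case: eqP => _ //; exact: negbK. Qed.

Lemma sum_flip k j (F : Xk k -> R) :
  \big[Rplus/0]_(c : Xk k) F c = \big[Rplus/0]_(c : Xk k) F (flip j c).
Proof. rewrite (reindex (@flip k j)) //; apply: onW_bij; exact: (Bijective (flipK j) (flipK j)). Qed.

Lemma card1 k (j : 'I_k) : INR #|[pred c : Xk k | c j]| = 1/2 * INR #|{: Xk k}|.
Proof.
have e1 : INR #|[pred c : Xk k | c j]| = INR #|[pred c : Xk k | ~~ c j]|.
  rewrite !card_ind (sum_flip j); apply: eq_bigr => c _; rewrite /= /flip ffunE eqxx.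
  done.
have e2 : INR #|[pred c : Xk k | c j]| + INR #|[pred c : Xk k | ~~ c j]| = INR #|{: Xk k}|.
  rewrite !card_ind -big_split /=; apply: eq_bigr => c _ /=; case: (c j) => /=; lra.
lra.
Qed.

Lemma card2 k (j j' : 'I_k) : j != j' -> INR #|[pred c : Xk k | c j && c j']| = 1/4 * INR #|{: Xk k}|.
Proof.
move=> hjj.
have e1 : INR #|[pred c : Xk k | c j && c j']| = INR #|[pred c : Xk k | c j && ~~ c j']|.
  rewrite !card_ind (sum_flip j'); apply: eq_bigr => c _; rewrite /= /flip !ffunE eqxx.
  by rewrite (negbTE hjj).
have e2 : INR #|[pred c : Xk k | c j && c j']| + INR #|[pred c : Xk k | c j && ~~ c j']| = INR #|[pred c : Xk k | c j]|.
  rewrite !card_ind -big_split /=; apply: eq_bigr => c _ /=; case: (c j); case: (c j') => /=; lra.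
have := card1 j; lra.
Qed.

Lemma sumR_opp (T : finType) (P : pred T) (F : T -> R) :
  \big[Rplus/0]_(i | P i) - F i = - \big[Rplus/0]_(i | P i) F i.
Proof. by rewrite (big_morph Ropp (id1 := 0) (op1 := Rplus)) //; [move=> x y; ring | ring]. Qed.

Lemma prob_def D k (E : config D k -> Prop) :
  prob E = (\big[Rplus/0]_(S : config D k) ind (E S)) / INR #|{: config D k}|.
Proof. by rewrite /prob card_ind. Qed.

Lemma card_config_pos D k : 0 < INR #|{: config D k}|.
Proof. apply: lt_0_INR; apply/ltP; apply/card_gt0P; by exists [ffun=> set0]. Qed.

Lemma card_Xk_pos k : 0 < INR #|{: Xk k}|.
Proof. apply: lt_0_INR; apply/ltP; apply/card_gt0P; by exists [ffun=> true]. Qed.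

Lemma prob_le D k (E F G : config D k -> Prop) :
  (forall S, E S -> F S \/ G S) -> prob E <= prob F + prob G.
Proof.
move=> h; rewrite !prob_def /Rdiv -Rmult_plus_distr_r -big_split /=.
have hc := card_config_pos D k.
apply: Rmult_le_compat_r; first by apply: Rlt_le; apply: Rinv_0_lt_compat.
apply: sumR_le => S _.
have := ind_ge0 (F S); have := ind_ge0 (G S).
case: (pboolP (E S)) => hE; last by rewrite (ind_F hE); lra.
rewrite (ind_T hE); case: (h S hE) => [hF|hG]; [rewrite (ind_T hF) | rewrite (ind_T hG)]; lra.
Qed.

Lemma prob_le0 D k (E : config D k -> Prop) :
  (forall S, ~ E S) -> prob E = 0.
Proof.
move=> h; rewrite prob_def (eq_bigr (fun _ => 0)); last by move=> S _; exact: ind_F.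
by rewrite sum_constR /Rdiv !Rmult_0_r Rmult_0_l.
Qed.

Lemma prob_le1 D k (E : config D k -> Prop) : prob E <= 1.
Proof.
rewrite prob_def.
have hc := card_config_pos D k.
apply: (Rmult_le_reg_r (INR #|{: config D k}|)) => //.
rewrite /Rdiv Rmult_assoc Rinv_l; last lra.
rewrite Rmult_1_r Rmult_1_l -[X in _ <= X]Rmult_1_r -sum_constR.
by apply: sumR_le => S _; apply: ind_le1.
Qed.

Lemma prob_union D k (B : finType) (bad : B -> config D k -> Prop) (good : config D k -> Prop) :
  (forall S, (forall b, ~ bad b S) -> good S) ->
  1 - \big[Rplus/0]_(b : B) prob (bad b) <= prob good.
Proof.
move=> h.
have hc := card_config_pos D k.
have e : \big[Rplus/0]_(b : B) prob (bad b) =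
   (\big[Rplus/0]_(S : config D k) \big[Rplus/0]_(b : B) ind (bad b S)) / INR #|{: config D k}|.
  rewrite exchange_big /= /Rdiv big_distrl /=; apply: eq_bigr => b _; exact: prob_def.
rewrite e prob_def.
have pt : forall S, 1 - \big[Rplus/0]_(b : B) ind (bad b S) <= ind (good S).
  move=> S; have h0 : 0 <= \big[Rplus/0]_(b : B) ind (bad b S) by apply: sumR_ge0 => b _; apply: ind_ge0.
  case: (pboolP (good S)) => hg.
    rewrite (ind_T hg); lra.
  have [b hb] : exists b, bad b S.
    apply: NNPP => hn; apply: hg; apply: h => b hb; apply: hn; by exists b.
  rewrite (ind_F hg) (bigD1 b) //= (ind_T hb).
  have : 0 <= \big[Rplus/0]_(b0 | b0 != b) ind (bad b0 S) by apply: sumR_ge0 => b0 _; apply: ind_ge0.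
  lra.
have hs := @sumR_le _ xpredT _ _ (fun S _ => pt S).
rewrite big_split /= sum_constR sumR_opp in hs.
change (INR #|{: config D k}| * 1 + - (\big[Rplus/0]_(S : config D k) \big[Rplus/0]_(b : B) ind (bad b S)) <= (\big[Rplus/0]_(S : config D k) ind (good S))) in hs.
have hs' : INR #|{: config D k}| - \big[Rplus/0]_(S : config D k) \big[Rplus/0]_(b : B) ind (bad b S)
           <= \big[Rplus/0]_(S : config D k) ind (good S).
  lra.
apply: (Rmult_le_reg_r (INR #|{: config D k}|)) => //.
rewrite /Rdiv Rmult_minus_distr_r Rmult_assoc Rinv_l ?Rmult_1_r ?Rmult_1_l; last lra.
rewrite Rmult_assoc Rinv_l; lra.
Qed.

Lemma div_bound (s c a : R) : 0 < c -> s <= 2 * c * a -> s / c <= 2 * a.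
Proof.
move=> hc h; apply: (Rmult_le_reg_r c) => //.
rewrite /Rdiv Rmult_assoc Rinv_l; lra.
Qed.

Lemma prob_tail1 D k (j : 'I_k) eps : 0 < eps <= 2 ->
  prob (fun S : config D k => eps * INR D <= Rabs (INR #|S j| - INR D * (1/2)))
  <= 2 * exp (- eps^2 * INR D / 8).
Proof.
move=> he; rewrite prob_sum.
have hX := card_Xk_pos k.
apply: div_bound; first by apply: pow_lt.
rewrite (eq_bigr (fun w : Om D k => ind (eps * INR D <= Rabs (\big[Rplus/0]_(i : 'I_D) (if (fun c : Xk k => c j) (w i) then 1 else 0) - INR D * (1/2))))); last first.
  by move=> w _; rewrite Ntr.
have := tail2 D (card1 j) _ he; rewrite Rmult_assoc; apply; lra.
Qed.

Lemma prob_tail2 D k (j j' : 'I_k) eps : j != j' -> 0 < eps <= 2 ->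
  prob (fun S : config D k => eps * INR D <= Rabs (INR #|S j :&: S j'| - INR D * (1/4)))
  <= 2 * exp (- eps^2 * INR D / 8).
Proof.
move=> hjj he; rewrite prob_sum.
have hX := card_Xk_pos k.
apply: div_bound; first by apply: pow_lt.
rewrite (eq_bigr (fun w : Om D k => ind (eps * INR D <= Rabs (\big[Rplus/0]_(i : 'I_D) (if (fun c : Xk k => c j && c j') (w i) then 1 else 0) - INR D * (1/4))))); last first.
  by move=> w _; rewrite N2tr.
have := tail2 D (card2 hjj) _ he; rewrite Rmult_assoc; apply; lra.
Qed.

Lemma sq_expand (a b sg : R) : (a + sg * b) * ((a + sg * b) * 1) =
  a * (a * 1) + 2 * sg * (a * b) + sg * (sg * 1) * (b * (b * 1)).
Proof. ring. Qed.

Lemma sign_lemma D (v : nat -> 'I_D -> R) m :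
  exists s : nat -> R, (forall j, s j = 1 \/ s j = -1) /\
   \big[Rplus/0]_(i : 'I_D) (\big[Rplus/0]_(j < m) (s j * v j i)) ^ 2
   <= \big[Rplus/0]_(i : 'I_D) \big[Rplus/0]_(j < m) (v j i) ^ 2.
Proof.
elim: m => [|m [s [hs IH]]].
  exists (fun _ => 1); split; first by left.
  apply: sumR_le => i _; rewrite !big_ord0; lra.
set u := fun i => \big[Rplus/0]_(j < m) (s j * v j i).
set sg := if Rle_dec 0 (\big[Rplus/0]_(i : 'I_D) (u i * v m i)) then -1 else 1.
exists (fun n => if n == m then sg else s n); split.
  move=> j; case: (j == m); last exact: hs.
  rewrite /sg; destruct (Rle_dec _ _); [right|left]; done.
have e : forall i, \big[Rplus/0]_(j < m.+1) ((if (j:nat) == m then sg else s j) * v j i)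
                 = u i + sg * v m i.
  move=> i; rewrite big_ord_recr /= eqxx; congr Rplus.
  apply: eq_bigr => j _; rewrite /=.
  by rewrite (ltn_eqF (ltn_ord j)).
rewrite (eq_bigr _ (fun i _ => f_equal (fun x => x ^ 2) (e i))).
rewrite [X in _ <= X](eq_bigr (fun i => \big[Rplus/0]_(j < m) (v j i)^2 + (v m i)^2)); last first.
  by move=> i _; rewrite big_ord_recr.
rewrite big_split /=.
have ex : \big[Rplus/0]_(i : 'I_D) (u i + sg * v m i) ^ 2 =
   \big[Rplus/0]_(i : 'I_D) (u i)^2 + 2 * sg * \big[Rplus/0]_(i : 'I_D) (u i * v m i)
   + sg^2 * \big[Rplus/0]_(i : 'I_D) (v m i)^2.
  rewrite !big_distrr -!big_split /=; apply: eq_bigr => i _. exact: sq_expand.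
rewrite ex.
have hsg : sg ^ 2 = 1 by rewrite /sg; destruct (Rle_dec _ _); simpl; ring.
have hc : sg * \big[Rplus/0]_(i : 'I_D) (u i * v m i) <= 0.
  rewrite /sg; set t := \big[Rplus/0]_(i : 'I_D) (u i * v m i); destruct (Rle_dec 0 t) as [h|h]; simpl; [lra | apply Rnot_le_lt in h; lra].
rewrite hsg /u /=. rewrite /u /= in hc. move: IH => /=. lra.
Qed.

Lemma sum_in (T : finType) (A : {set T}) (a : R) :
  \big[Rplus/0]_(i : T) (if i \in A then a else 0) = INR #|A| * a.
Proof.
rewrite -big_mkcond /= -sum1_card INR_sum big_distrl /=.
by apply: eq_bigr => i _; rewrite /= Rmult_1_l.
Qed.

Lemma abs_amgm (y D r : R) : 0 < D -> 0 < r -> Rabs y <= y^2 * D / (4 * r) + r / D.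
Proof.
move=> hD hr.
have hy : Rabs y ^ 2 = y ^ 2 by rewrite -Rsqr_pow2 -Rsqr_abs Rsqr_pow2.
have hy0 := Rabs_pos y.
have key : 4 * r * D * Rabs y <= y ^ 2 * D ^ 2 + 4 * r ^ 2 by have := pow2_ge_0 (D * Rabs y - 2 * r); nra.
apply: (Rmult_le_reg_r (4 * r * D)); first nra.
have -> : (y ^ 2 * D / (4 * r) + r / D) * (4 * r * D) = y ^ 2 * D ^ 2 + 4 * r ^ 2.
  by field; lra.
lra.
Qed.

Lemma card_leD D (A : {set 'I_D}) : INR #|A| <= INR D.
Proof. apply: le_INR; apply/leP; apply: leq_trans (max_card _) _; by rewrite card_ord. Qed.

Lemma det1 D k (S : config D k) : (0 < k)%nat ->
  (forall j, INR D / 4 < INR #|S j|) -> kappa_ge S (1/2 * sqrt (INR k)).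
Proof.
case: k S => [|k'] S // _ hS.
set k := k'.+1.
have hD : 0 < INR D.
  have := hS ord0; have := card_leD (S ord0); lra.
have [s [hs hsum]] := sign_lemma (fun n i => Amat S i (inord n)) k.
set sig := fun j : 'I_k => s (nat_of_ord j).
set Q := \big[Rplus/0]_(i : 'I_D) (Amul S sig i) ^ 2.
have hQ : Q <= INR k * 4 / INR D.
  have e1 : Q = \big[Rplus/0]_(i : 'I_D) (\big[Rplus/0]_(j < k) (s j * Amat S i (inord j))) ^ 2.
    apply: eq_bigr => i _; congr (_ ^ 2); rewrite /Amul /rsum; apply: eq_bigr => j _.
    by rewrite inord_val /sig Rmult_comm.
  rewrite e1; apply: Rle_trans hsum _.
  rewrite exchange_big /=.
  have e2 : forall j : 'I_k, \big[Rplus/0]_(i : 'I_D) Amat S i (inord j) ^ 2 = / INR #|S j|.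
    move=> j; rewrite inord_val /Amat.
    rewrite (eq_bigr (fun i => if i \in S j then (/ INR #|S j|) ^ 2 else 0)); last first.
      by move=> i _; case: (i \in S j) => //=; ring.
    rewrite sum_in; have := hS j; move=> h; field; lra.
  rewrite (eq_bigr _ (fun j _ => e2 j)).
  have -> : INR k * 4 / INR D = \big[Rplus/0]_(j : 'I_k) (4 / INR D).
    by rewrite sum_constR card_ord; field; lra.
  apply: sumR_le => j _.
  have := hS j => h.
  apply: (Rmult_le_reg_r (INR #|S j| * INR D)); first nra.
  have -> : / INR #|S j| * (INR #|S j| * INR D) = INR D by field; lra.
  have -> : 4 / INR D * (INR #|S j| * INR D) = 4 * INR #|S j| by field; lra.
  lra.
set r := sqrt (INR k).
have hk : 0 < INR k by apply: lt_0_INR; apply/ltP.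
have hr : 0 < r by apply: sqrt_lt_R0.
have hrr : r * r = INR k by apply: sqrt_sqrt; lra.
have hA : norm1 (Amul S sig) <= 2 * r.
  rewrite /norm1 /rsum.
  apply: Rle_trans (@sumR_le _ xpredT _ _ (fun i _ => abs_amgm (Amul S sig i) hD hr)) _.
  rewrite big_split /= sum_constR card_ord.
  rewrite (eq_bigr (fun i => (Amul S sig i) ^ 2 * (INR D / (4 * r)))); last first.
    by move=> i _; rewrite /Rdiv Rmult_assoc.
  rewrite -big_distrl /= -/Q.
  have : Q * (INR D / (4 * r)) <= INR k * 4 / INR D * (INR D / (4 * r)).
    apply: Rmult_le_compat_r => //; apply: Rlt_le; apply: Rdiv_lt_0_compat; lra.
  have -> : INR k * 4 / INR D * (INR D / (4 * r)) = r by rewrite -hrr; field; lra.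
  have -> : INR D * (r / INR D) = r by field; lra.
  lra.
have hn : norm1 sig = INR k.
  rewrite /norm1 /rsum (eq_bigr (fun _ => 1)); last first.
    by move=> j _; rewrite /sig; case: (hs j) => ->; rewrite ?Rabs_R1 ?Rabs_Ropp ?Rabs_R1.
  by rewrite sum_constR card_ord Rmult_1_r.
move=> kap [hkap hok].
have := hok sig; rewrite hn => h.
have h2 := Rle_trans _ _ _ h hA.
have h3 : INR k <= 2 * r * kap.
  apply: (Rmult_le_reg_r (/ kap)); first by apply: Rinv_0_lt_compat.
  rewrite Rmult_assoc Rinv_r; lra.
rewrite -hrr in h3; apply: (Rmult_le_reg_l r) => //; nra.
Qed.

Lemma bigmax_seq (T : eqType) (s : seq T) (F : T -> R) :
  (forall i, 0 <= F i) ->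
  0 <= \big[Rmax/0]_(i <- s) F i /\
  (forall i, i \in s -> F i <= \big[Rmax/0]_(i <- s) F i) /\
  (\big[Rmax/0]_(i <- s) F i = 0 \/ exists2 i, i \in s & \big[Rmax/0]_(i <- s) F i = F i).
Proof.
move=> hF; elim: s => [|a s [h0 [h1 h2]]].
  rewrite big_nil; split; first lra; split => //.
  by left.
rewrite big_cons; split; first by apply: Rle_trans h0 (Rmax_r _ _).
split.
  move=> i; rewrite in_cons; case/orP => [/eqP ->|hi]; first exact: Rmax_l.
  apply: Rle_trans (h1 i hi) (Rmax_r _ _).
case: (Rle_dec (F a) (\big[Rmax/0]_(i <- s) F i)) => hle.
  rewrite (Rmax_right _ _ hle); case: h2 => [->|[i hi ->]]; [by left | right; exists i => //; by rewrite in_cons hi orbT].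
rewrite Rmax_left; last by apply: Rlt_le; apply: Rnot_le_lt.
by right; exists a => //; rewrite in_cons eqxx.
Qed.

Lemma norminf_facts n (x : 'I_n -> R) :
  (forall j, Rabs (x j) <= norminf x) /\ (norminf x = 0 \/ exists j, norminf x = Rabs (x j)).
Proof.
have [h0 [h1 h2]] := @bigmax_seq _ (index_enum 'I_n) (fun j => Rabs (x j)) (fun j => Rabs_pos _).
split; first by move=> j; apply: h1; rewrite mem_index_enum.
case: h2 => [h|[j _ h]]; [by left | right; by exists j].
Qed.

Lemma norm1_ge0 n (x : 'I_n -> R) : 0 <= norm1 x.
Proof. by apply: sumR_ge0 => i _; apply: Rabs_pos. Qed.

Lemma coef_c D k (S : config D k) (j j0 : 'I_k) :
  0 < INR #|S j| ->
  \big[Rplus/0]_(i : 'I_D) ((if i \in S j0 then 1 else -1) * Amat S i j)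
  = (2 * INR #|S j :&: S j0| - INR #|S j|) / INR #|S j|.
Proof.
move=> hN.
transitivity (/ INR #|S j| * (\big[Rplus/0]_(i : 'I_D) (if i \in S j :&: S j0 then 2 else 0)
                             - \big[Rplus/0]_(i : 'I_D) (if i \in S j then 1 else 0))).
  rewrite /Rminus -sumR_opp -big_split big_distrr /=; apply: eq_bigr => i _.
  rewrite /Amat in_setI; case: (i \in S j); case: (i \in S j0) => /=; ring.
rewrite !sum_in; move: hN. set a := INR #|S j|. set b := INR #|S j :&: S j0|. move=> hN; field; lra.
Qed.

Lemma det2 D k (S : config D k) (eps : R) : (0 < k)%nat -> 0 < eps -> 24 * eps * INR k <= 1 ->
  (forall j, Rabs (INR #|S j| - INR D * (1/2)) < eps * INR D) ->
  (forall j j', j != j' -> Rabs (INR #|S j :&: S j'| - INR D * (1/4)) < eps * INR D) ->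
  lambda_le S 2.
Proof.
move=> hk he hek h1 h2.
have hkR : 1 <= INR k by apply: (le_INR 1); apply/leP.
have hD : 0 <= INR D by apply: pos_INR.
have hN : forall j, INR D / 4 < INR #|S j|.
  move=> j; have := h1 j; move/Rabs_def2 => [ha hb]. nra.
have hc : forall j j0, j != j0 ->
   Rabs ((2 * INR #|S j :&: S j0| - INR #|S j|) / INR #|S j|) <= 12 * eps.
  move=> j j0 hj.
  have hNj := hN j.
  have hNpos : 0 < INR #|S j| by lra.
  have [a1 a2] := Rabs_def2 _ _ (h1 j).
  have [b1 b2] := Rabs_def2 _ _ (h2 j j0 hj).
  rewrite /Rdiv Rabs_mult Rabs_inv (Rabs_right (INR #|S j|)); last lra.
  apply: (Rmult_le_reg_r (INR #|S j|)) => //.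
  rewrite Rmult_assoc Rinv_l; last lra.
  rewrite Rmult_1_r; apply: Rabs_le; split; nra.
exists 2; split; last lra.
split; first lra.
move=> x.
have [hM hM2] := norminf_facts x.
case: hM2 => [->|[j0 hj0]].
  rewrite /Rdiv Rmult_0_l; exact: norm1_ge0.
set M := norminf x in hM hj0 *.
set sg := if Rle_dec 0 (x j0) then 1 else -1.
have hsg : sg * x j0 = M.
  rewrite hj0 /sg; case: (Rle_dec 0 (x j0)) => h /=.
    rewrite Rabs_right; lra.
  rewrite Rabs_left; lra.
have hsg1 : Rabs sg = 1 by rewrite /sg; case: (Rle_dec 0 (x j0)) => h /=; rewrite ?Rabs_Ropp ?Rabs_R1.
set w := fun i : 'I_D => if i \in S j0 then 1 else -1.
have hw : forall i, Rabs (w i) = 1 by move=> i; rewrite /w; case: (i \in S j0); rewrite ?Rabs_Ropp ?Rabs_R1.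
have step1 : \big[Rplus/0]_(i : 'I_D) (sg * w i * Amul S x i) <= norm1 (Amul S x).
  apply: sumR_le => i _.
  apply: Rle_trans (Rle_abs _) _.
  by rewrite !Rabs_mult hsg1 hw; lra.
have step2 : \big[Rplus/0]_(i : 'I_D) (sg * w i * Amul S x i) =
   \big[Rplus/0]_(j : 'I_k) (sg * x j * \big[Rplus/0]_(i : 'I_D) (w i * Amat S i j)).
  rewrite (eq_bigr (fun i => \big[Rplus/0]_(j : 'I_k) (sg * w i * (Amat S i j * x j)))); last first.
    by move=> i _; rewrite /Amul /rsum big_distrr.
  rewrite exchange_big /=; apply: eq_bigr => j _; rewrite big_distrr /=.
  by apply: eq_bigr => i _; ring.
have hM0 : 0 <= M by apply: Rle_trans (hM j0); apply: Rabs_pos.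
have step3 : forall j, j != j0 -> - (M * (12 * eps)) <= sg * x j * \big[Rplus/0]_(i : 'I_D) (w i * Amat S i j).
  move=> j hj.
  rewrite /w coef_c; last by have := hN j; lra.
  set c := (2 * INR #|S j :&: S j0| - INR #|S j|) / INR #|S j|.
  have := hc j j0 hj; rewrite -/c => hcj.
  have hxj := hM j.
  have : Rabs (sg * x j * c) <= M * (12 * eps).
    rewrite Rabs_mult (Rabs_mult sg) hsg1 Rmult_1_l; apply: Rmult_le_compat; [apply: Rabs_pos | apply: Rabs_pos | exact: hxj | exact: hcj].
  move=> hh; have := Rle_abs (- (sg * x j * c)); rewrite Rabs_Ropp; lra.
have hc0 : \big[Rplus/0]_(i : 'I_D) (w i * Amat S i j0) = 1.
  rewrite /w coef_c; last by have := hN j0; lra.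
  rewrite setIid; have := hN j0 => h; field; lra.
rewrite step2 (bigD1 j0) //= hc0 Rmult_1_r hsg in step1.
have hsum : - (M / 2) <= \big[Rplus/0]_(j | j != j0) (sg * x j * \big[Rplus/0]_(i : 'I_D) (w i * Amat S i j)).
  apply: Rle_trans (sumR_le (fun j hj => step3 j hj)).
  rewrite sumR_opp.
  have : \big[Rplus/0]_(j | j != j0) (M * (12 * eps)) <= \big[Rplus/0]_(j : 'I_k) (M * (12 * eps)).
    rewrite [X in _ <= X](bigD1 j0) //=; have : 0 <= M * (12 * eps) by nra. lra.
  rewrite sum_constR card_ord => h. have := Rmult_le_compat_l M _ _ hM0 hek => hh. apply: Rle_trans _ (Ropp_le_contravar _ _ h). lra.
have := Rle_trans _ _ _ (Rplus_le_compat_l M _ _ hsum) step1. lra.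
Qed.

Lemma prob_part1 D k : (0 < k)%nat ->
  1 - 2 * INR k * exp (- INR D / 128) <=
  prob (fun S : config D k => kappa_ge S (1/2 * sqrt (INR k))).
Proof.
move=> hk.
set bad := fun (j : 'I_k) (S : config D k) => 1/4 * INR D <= Rabs (INR #|S j| - INR D * (1/2)).
have hu := @prob_union D k _ bad (fun S => kappa_ge S (1/2 * sqrt (INR k))).
apply: Rle_trans (hu _).
  have hb : \big[Rplus/0]_(j : 'I_k) prob (bad j) <= \big[Rplus/0]_(j : 'I_k) (2 * exp (- INR D / 128)).
    apply: sumR_le => j _.
    have := @prob_tail1 D k j (1/4); rewrite /bad.
    have -> : - (1/4) ^ 2 * INR D / 8 = - INR D / 128 by field.
    apply; lra.
  rewrite sum_constR card_ord in hb.
  apply: Rle_trans _ (Rplus_le_compat_l 1 _ _ (Ropp_le_contravar _ _ hb)); lra.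
move=> S hS; apply: det1 => // j.
have := hS j; rewrite /bad => h.
apply Rnot_le_lt in h.
have := Rle_abs (INR D * (1/2) - INR #|S j|); rewrite Rabs_minus_sym; lra.
Qed.

Lemma prob_part2 D k : (0 < k)%nat ->
  1 - 4 * (INR k * INR k) * exp (- INR D / (4608 * INR k ^ 2)) <=
  prob (fun S : config D k => lambda_le S 2).
Proof.
move=> hk.
have hkR : 1 <= INR k by apply: (le_INR 1); apply/leP.
set eps := 1 / (24 * INR k).
have he : 0 < eps <= 2.
  rewrite /eps; split; first by apply: Rdiv_lt_0_compat; lra.
  apply: (Rmult_le_reg_r (24 * INR k)); first lra.
  rewrite /Rdiv Rmult_1_l Rinv_l; lra.
have hexp : - eps ^ 2 * INR D / 8 = - INR D / (4608 * INR k ^ 2) by rewrite /eps; field; lra.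
set bad := fun (jj : 'I_k * 'I_k) (S : config D k) =>
   eps * INR D <= Rabs (INR #|S jj.1| - INR D * (1/2)) \/
   (jj.1 != jj.2 /\ eps * INR D <= Rabs (INR #|S jj.1 :&: S jj.2| - INR D * (1/4))).
have hu := @prob_union D k _ bad (fun S => lambda_le S 2).
apply: Rle_trans (hu _).
  have hb : \big[Rplus/0]_(jj : 'I_k * 'I_k) prob (bad jj) <=
            \big[Rplus/0]_(jj : 'I_k * 'I_k) (4 * exp (- INR D / (4608 * INR k ^ 2))).
    apply: sumR_le => [[j j']] _.
    apply: Rle_trans (prob_le (F := fun S : config D k => eps * INR D <= Rabs (INR #|S j| - INR D * (1/2))) (G := fun S => j != j' /\ eps * INR D <= Rabs (INR #|S j :&: S j'| - INR D * (1/4))) _) _.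
      by move=> S; rewrite /bad /= => h; exact: h.
    have h1 := @prob_tail1 D k j eps he.
    have h2 : prob (fun S : config D k => j != j' /\ eps * INR D <= Rabs (INR #|S j :&: S j'| - INR D * (1/4)))
              <= 2 * exp (- eps ^ 2 * INR D / 8).
      case: (boolP (j != j')) => hjj.
        apply: Rle_trans (prob_le (F := fun S : config D k => eps * INR D <= Rabs (INR #|S j :&: S j'| - INR D * (1/4))) (G := fun _ => False) _) _.
          by move=> S [_ h]; left.
        rewrite [X in _ + X]prob_le0; last by move=> S.
        have := prob_tail2 D hjj he; lra.
      rewrite prob_le0; last by move=> S [] .
      have := exp_pos (- eps ^ 2 * INR D / 8); lra.
    rewrite hexp in h1 h2; lra.
  rewrite sum_constR card_prod card_ord mult_INR in hb.
  apply: Rle_trans _ (Rplus_le_compat_l 1 _ _ (Ropp_le_contravar _ _ hb)); lra.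
move=> S hS.
apply: (@det2 D k S eps hk) => //.
- exact: (proj1 he).
- by apply: Req_le; rewrite /eps; field; lra.
- move=> j; have := hS (j, j); rewrite /bad /= => h.
  apply: Rnot_le_lt => h'; apply: h; by left.
- move=> j j' hjj; have := hS (j, j'); rewrite /bad /= => h.
  apply: Rnot_le_lt => h'; apply: h; by right.
Qed.

Lemma cv_from (u g : nat -> R) :
  (forall n, u n <= 1) ->
  (exists N0, forall n, (N0 <= n)%coq_nat -> 1 - g n <= u n) ->
  (forall eps, 0 < eps -> exists N, forall n, (N <= n)%coq_nat -> g n < eps) ->
  Un_cv u 1.
Proof.
move=> hu [N0 h0] hg eps he.
have [N1 h1] := hg eps he.
exists (Nat.max N0 N1) => n hn.
rewrite /R_dist Rabs_left1; last by have := hu n; lra.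
have := h0 n ltac:(lia); have := h1 n ltac:(lia); lra.
Qed.

Lemma ln_pos_nat n : (2 <= n)%coq_nat -> 0 < ln (INR n).
Proof.
move=> hn; rewrite -ln_1; apply: ln_increasing; first lra.
have : INR 2 <= INR n by apply: le_INR.
rewrite /= ; lra.
Qed.

Lemma exp_mln (x : R) (m : nat) : 0 < x -> exp (- (INR m * ln x)) = / x ^ m.
Proof. move=> hx; rewrite exp_Ropp -ln_pow // exp_ln //; exact: pow_lt. Qed.

Lemma small_inv (eps : R) : 0 < eps -> exists N, forall n, (N <= n)%coq_nat -> 4 / INR n < eps /\ (2 <= n)%coq_nat.
Proof.
move=> he.
have [N hN] := INR_archimed eps 4 he.
exists (Nat.max N 2) => n hn; split; last lia.
have hNn : INR N <= INR n by apply: le_INR; lia.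
have hn0 : 0 < INR n by apply: lt_0_INR; lia.
apply: (Rmult_lt_reg_r (INR n)) => //.
rewrite /Rdiv Rmult_assoc Rinv_l; last lra.
nra.
Qed.

Theorem lemma6p4 :
  (forall D : nat -> nat,
     cv_infty (fun k => (INR (D k) / (INR k * ln (INR k)))%R) ->
     exists c : R, (0 < c)%R /\
       Un_cv (fun k => prob (fun S : config (D k) k =>
                         kappa_ge S (c * sqrt (INR k))%R)) 1%R) /\
  (forall D : nat -> nat,
     cv_infty (fun k => (INR (D k) / (INR k * INR k * ln (INR k)))%R) ->
     Un_cv (fun k => prob (fun S : config (D k) k => lambda_le S 2%R)) 1%R).
Proof.
split.
- move=> D hD; exists (1/2); split; first lra.
  apply: (@cv_from _ (fun k => 2 * INR k * exp (- INR (D k) / 128))).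
  + move=> n; exact: prob_le1.
  + exists 1%nat => n hn; apply: prob_part1; apply/leP; lia.
  + move=> eps he.
    have [N1 h1] := hD 256.
    have [N2 h2] := small_inv he.
    exists (Nat.max N1 N2) => n hn.
    have [h4 hn2] := h2 n ltac:(lia).
    have hl := ln_pos_nat hn2.
    have hn0 : 1 <= INR n by apply: (le_INR 1); lia.
    have hm := h1 n ltac:(lia).
    have hnl : 0 < INR n * ln (INR n) by nra.
    have hDn : 256 * (INR n * ln (INR n)) < INR (D n).
      apply: (Rmult_lt_reg_r (/ (INR n * ln (INR n)))); first by apply: Rinv_0_lt_compat.
      rewrite Rmult_assoc Rinv_r; last lra.
      by rewrite Rmult_1_r.
    have he2 : exp (- INR (D n) / 128) <= / INR n ^ 2.
      rewrite -exp_mln; last lra.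
      apply: exp_le_mono; rewrite /=; nra.
    have hp : 0 < INR n ^ 2 by apply: pow_lt; lra.
    have : 2 * INR n * exp (- INR (D n) / 128) <= 2 * INR n * / INR n ^ 2.
      apply: Rmult_le_compat_l => //; lra.
    have -> : 2 * INR n * / INR n ^ 2 = 2 / INR n by field; lra.
    have : 2 / INR n < 4 / INR n.
      apply: Rmult_lt_compat_r; [apply: Rinv_0_lt_compat; lra | lra].
    lra.
- move=> D hD.
  apply: (@cv_from _ (fun k => 4 * (INR k * INR k) * exp (- INR (D k) / (4608 * INR k ^ 2)))).
  + move=> n; exact: prob_le1.
  + exists 1%nat => n hn; apply: prob_part2; apply/leP; lia.
  + move=> eps he.
    have [N1 h1] := hD 18432.
    have [N2 h2] := small_inv he.
    exists (Nat.max N1 N2) => n hn.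
    have [h4 hn2] := h2 n ltac:(lia).
    have hl := ln_pos_nat hn2.
    have hn0 : 1 <= INR n by apply: (le_INR 1); lia.
    have hm := h1 n ltac:(lia).
    have hnn : 0 < INR n * INR n by nra.
    have hnl : 0 < INR n * INR n * ln (INR n) by apply: Rmult_lt_0_compat.
    have hDn : 18432 * (INR n * INR n * ln (INR n)) < INR (D n).
      apply: (Rmult_lt_reg_r (/ (INR n * INR n * ln (INR n)))); first by apply: Rinv_0_lt_compat.
      rewrite Rmult_assoc Rinv_r; last lra.
      by rewrite Rmult_1_r.
    have hp2 : 0 < INR n ^ 2 by apply: pow_lt; lra.
    have he2 : exp (- INR (D n) / (4608 * INR n ^ 2)) <= / INR n ^ 4.
      rewrite -exp_mln; last lra.
      apply: exp_le_mono.
      have -> : - INR (D n) / (4608 * INR n ^ 2) = - (INR (D n) / (4608 * INR n ^ 2)) by field; lra.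
      apply: Ropp_le_contravar.
      apply: (Rmult_le_reg_r (4608 * INR n ^ 2)); first lra.
      have -> : INR (D n) / (4608 * INR n ^ 2) * (4608 * INR n ^ 2) = INR (D n) by field; lra.
      rewrite /=; nra.
    have hp : 0 < INR n ^ 4 by apply: pow_lt; lra.
    have : 4 * (INR n * INR n) * exp (- INR (D n) / (4608 * INR n ^ 2)) <= 4 * (INR n * INR n) * / INR n ^ 4.
      apply: Rmult_le_compat_l => //; nra.
    have -> : 4 * (INR n * INR n) * / INR n ^ 4 = 4 / INR n / INR n by field; lra.
    have : 4 / INR n / INR n <= 4 / INR n.
      have h0 : 0 < 4 / INR n by apply: Rdiv_lt_0_compat; lra.
      rewrite /Rdiv; rewrite -[X in _ <= X]Rmult_1_r; apply: Rmult_le_compat_l; first lra.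
      rewrite -Rinv_1; apply: Rinv_le_contravar; lra.
    lra.
Qed.
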